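(* Let $P$ be any product rule with $P$-product $*$, and suppose that for each $b\in\Sigma$ there is a term $Q_b$ over $\{x,\dot x,y,\dot y\}$ such that $\delta^R_b(f*g)=[\![Q_b]\!]_{[x\mapsto f,\dot x\mapsto\delta^R_bf,y\mapsto g,\dot y\mapsto\delta^R_bg]}$ for all series $f,g$. Then for every $P$-finite series $f$ and every $b\in\Sigma$, the series $\delta^R_bf$ is $P$-finite.
   Context: Let $\Sigma$ be a finite alphabet, $\Sigma^*$ the finite words with empty word $\varepsilon$. A series is $f:\Sigma^*\to\mathbb Q$, $f_w=f(w)$; series form a $\mathbb Q$-vector space under pointwise operations with zero $\mathbb 0$. For $a\in\Sigma$, $\delta_af$ is $w\mapsto f(aw)$ and $\delta^R_af$ is $w\mapsto f(wa)$. Terms over $X$: generated by $u,v::=x\mid 0\mid c\cdot u\mid u+v\mid u*v$. A product rule is a term $P$ over $\{x,\dot x,y,\dot y\}$. The $P$-product $*$ and semantics $[\![u]\!]_\varrho$ of terms under valuations are the unique pair with $(f*g)_\varepsilon=f_\varepsilon g_\varepsilon$, $\delta_a(f*g)=[\![P]\!]_{[x\mapsto f,\dot x\mapsto\delta_af,y\mapsto g,\dot y\mapsto\delta_ag]}$, and $[\![\cdot]\!]_\varrho$ interpreting variables via $\varrho$, constructors by zero, scalar multiplication, addition, $*$. $P$-finite: $A(g_1,\dots,g_k)$ is the smallest set of series containing $\mathbb 0,g_1,\dots,g_k$ closed under scalar multiplication, $+$, $*$; $f$ is $P$-finite if there are $g_1=f,\dots,g_k$ with $\delta_ag_i\in A(g_1,\dots,g_k)$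 for all $i$ and $a\in\Sigma$. *)

(* Defs.v *)
From mathcomp Require Import all_boot all_algebra.
Set Implicit Arguments. Unset Strict Implicit. Unset Printing Implicit Defensive.
Import GRing.Theory.
Local Open Scope ring_scope.

Definition series (A : finType) := seq A -> rat.

Definition szero (A : finType) : series A := fun _ => 0.

Definition dl (A : finType) (a : A) (f : series A) : series A :=
  fun w => f (a :: w).
Definition dr (A : finType) (b : A) (f : series A) : series A :=
  fun w => f (rcons w b).

Inductive term (V : Type) : Type :=
| TVar of V
| TZero
| TScale of rat & term V
| TAdd of term V & term V
| TMul of term V & term V.

Inductive pvar : Type := Vx | Vxd | Vy | Vyd.

Definition pval (A : finType) (f f' g g' : series A) (v : pvar) : series A :=
  match v with Vx => f | Vxd => f' | Vy => g | Vyd => g' end.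

Fixpoint sem_with (A : finType) (V : Type) (mul : series A -> series A -> series A)
  (rho : V -> series A) (t : term V) : series A :=
  match t with
  | TVar x => rho x
  | TZero => fun _ => 0
  | TScale c u => fun w => c * sem_with mul rho u w
  | TAdd u v => fun w => sem_with mul rho u w + sem_with mul rho v w
  | TMul u v => mul (sem_with mul rho u) (sem_with mul rho v)
  end.

(* Approximations of the P-product: [prodn P n f g w] is the value of the
   P-product at every word w of length <= n (the value of (f*g)(a w) only
   depends on products evaluated at the shorter word w). *)
Fixpoint prodn (A : finType) (P : term pvar) (n : nat) (f g : series A) : series A :=
  match n with
  | 0 => fun w => if w is [::] then f [::] * g [::] else 0
  | n'.+1 => fun w =>
      match w with
      | [::] => f [::] * g [::]
      | a :: w' => sem_with (prodn P n') (pval f (dl a f) g (dl a g)) P w'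
      end
  end.

(* The P-product:  (f*g)_e = f_e g_e,
   delta_a (f*g) = [[P]]_[x:=f, x':=delta_a f, y:=g, y':=delta_a g]. *)
Definition pprod (A : finType) (P : term pvar) (f g : series A) : series A :=
  fun w => prodn P (size w) f g w.

Definition sem (A : finType) (P : term pvar) (V : Type) (rho : V -> series A)
  (t : term V) : series A := sem_with (pprod P) rho t.

Inductive gen (A : finType) (P : term pvar) (k : nat) (gs : 'I_k -> series A)
  : series A -> Prop :=
| gen_zero : gen P gs (fun _ => 0)
| gen_base i : gen P gs (gs i)
| gen_scale c h : gen P gs h -> gen P gs (fun w => c * h w)
| gen_add h1 h2 : gen P gs h1 -> gen P gs h2 -> gen P gs (fun w => h1 w + h2 w)
| gen_mul h1 h2 : gen P gs h1 -> gen P gs h2 -> gen P gs (pprod P h1 h2).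

Definition Pfinite (A : finType) (P : term pvar) (f : series A) : Prop :=
  exists (k : nat) (gs : 'I_k.+1 -> series A),
    gs ord0 = f /\ forall (i : 'I_k.+1) (a : A), gen P gs (dl a (gs i)).

(* Main.v *)
Require Import Defs.
From mathcomp Require Import all_boot all_algebra zify.
Set Implicit Arguments.

Section S.
Variables (A : finType) (P : term pvar).

Lemma gen_sem k (gs : 'I_k -> series A) (V : Type) (rho : V -> series A) t :
  (forall v, gen P gs (rho v)) -> gen P gs (sem P rho t).
Proof.
move=> H; rewrite /sem; elim: t => [v||c u IH|u IHu v IHv|u IHu v IHv] /=.
- exact: H.
- exact: gen_zero.
- exact: gen_scale.
- exact: gen_add.
- exact: gen_mul.
Qed.

Lemma gen_mono k k' (gs : 'I_k -> series A) (gs' : 'I_k' -> series A) h :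
  (forall i, gen P gs' (gs i)) -> gen P gs h -> gen P gs' h.
Proof.
move=> H; elim => [|i|c h0 _ IH|h1 h2 _ IH1 _ IH2|h1 h2 _ IH1 _ IH2].
- exact: gen_zero.
- exact: H.
- exact: gen_scale.
- exact: gen_add.
- exact: gen_mul.
Qed.

Lemma gen_dr (b : A) (Qb : term pvar) k k' (gs : 'I_k -> series A) (gs' : 'I_k' -> series A) h :
  (forall f g : series A, dr b (pprod P f g) = sem P (pval f (dr b f) g (dr b g)) Qb) ->
  (forall i, gen P gs' (gs i)) -> (forall i, gen P gs' (dr b (gs i))) ->
  gen P gs h -> gen P gs' (dr b h).
Proof.
move=> HQ H1 H2; elim => [|i|c h0 G IH|h1 h2 G1 IH1 G2 IH2|h1 h2 G1 IH1 G2 IH2].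
- exact: gen_zero.
- exact: H2.
- exact: (gen_scale c IH).
- exact: (gen_add IH1 IH2).
- rewrite HQ; apply: gen_sem => -[] /=.
  + exact: gen_mono G1.
  + exact: IH1.
  + exact: gen_mono G2.
  + exact: IH2.
Qed.

End S.

Theorem mainTheorem16 (A : finType) (P : term pvar) :
  (forall b : A, exists Qb : term pvar, forall f g : series A,
      dr b (pprod P f g) = sem P (pval f (dr b f) g (dr b g)) Qb) ->
  forall (f : series A) (b : A), Pfinite P f -> Pfinite P (dr b f).
Proof.
move=> HQ f b [k [gs [Hf Hd]]].
have [Qb HQb] := HQ b.
pose gs' (i : 'I_(k + k.+1).+1) : series A :=
  if (i < k.+1)%N then dr b (gs (inord i)) else gs (inord (i - k.+1)).
have E1 : forall j : 'I_k.+1, gs' (inord j) = dr b (gs j).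
  move=> j; rewrite /gs' inordK; last by have := ltn_ord j; lia.
  by rewrite ltn_ord inord_val.
have E2 : forall j : 'I_k.+1, gs' (inord (j + k.+1)) = gs j.
  move=> j; rewrite /gs' inordK; last by have := ltn_ord j; lia.
  by rewrite ltnNge leq_addl /= addnK inord_val.
have B1 : forall j, gen P gs' (gs j) by move=> j; rewrite -E2; exact: gen_base.
have B2 : forall j, gen P gs' (dr b (gs j)) by move=> j; rewrite -E1; exact: gen_base.
exists (k + k.+1), gs'; split.
  rewrite -Hf -E1; congr gs'; apply: val_inj; rewrite /= inordK //.
move=> i a; rewrite [gs' i]/gs'; case: ifP => _.
- change (gen P gs' (dr b (dl a (gs (inord i))))); exact: (gen_dr _ HQb B1 B2 (Hd _ a)).
- exact: (gen_mono B1 (Hd _ a)).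
Qed.
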